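(* Let $V=\mathbb{C}^n$ be the defining representation of $GL_n(\mathbb{C})$, restricted to $T\rtimes S_n$, and let $k\ge 0$. Let $A_k^n$ be the set of $k$-tuples of nonnegative integers $(a_1,\dots,a_k)$ with $a_1+2a_2+\dots+ka_k=k$ and $a_1+a_2+\dots+a_k\le n$. Then as representations of $T\rtimes S_n$, $$\mathrm{Sym}^k(V)\cong\bigoplus_{(a_1,\dots,a_k)\in A_k^n}\tilde{M}((a_1),(a_2),\dots,(a_k)),$$ where $(a)$ denotes the one-row partition with $a$ boxes (the empty partition if $a=0$).
   Context: Let $T\subset GL_n(\mathbb{C})$ be the diagonal torus, $S_n$ the permutation matrices, and $T\rtimes S_n\cong\mathbb{C}^\times\wr S_n$ the monomial matrices. For a partition $\lambda$ of $r$ and integer $k$, $S^{\lambda,k}$ is the representation of $\mathbb{C}^\times\wr S_r$ on the Specht module $S^\lambda$ with each copy of $\mathbb{C}^\times$ acting by $z\mapsto z^k$. For a composition $\nu=(\nu_1,\dots,\nu_\ell)$ of $n$ and integers $\mathbf{w}$, $M(\nu,\mathbf{w}):=\mathrm{Ind}_{(\mathbb{C}^\times\wr S_{\nu_1})\times\dots\times(\mathbb{C}^\times\wr S_{\nu_\ell})}^{\mathbb{C}^\times\wr S_n}(S^{(\nu_1),w_1}\otimes\dots\otimes S^{(\nu_\ell),w_\ell})$ (block-diagonal subgroup). For partitions $\lambda^1,\dots,\lambda^j$, $\lambda^i=(\lambda^i_1,\dots,\lambda^i_{\ell_i})$, of total size $m\le n$, $\tilde{M}(\lambda^1,\dots,\lambda^j):=M((n-m,\lambda^1_1,\dots,\lambda^1_{\ell_1},\dots,\lambda^j_1,\dots,\lambda^j_{\ell_j}),(0,1,\dots,1,\dots,j,\dots,j))$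 with $\ell_i$ entries equal to $i$ (the part $n-m$ omitted if zero). *)

(* Defs.v *)
From mathcomp Require Import all_boot all_order all_algebra.
From mathcomp Require Import Rstruct.
From mathcomp Require Import complex.
From mathcomp Require Import mpoly.
Set Implicit Arguments. Unset Strict Implicit. Unset Printing Implicit Defensive.
Import Order.TTheory GRing.Theory Num.Theory.
Local Open Scope ring_scope.

Notation C := (complex Rdefinitions.R).

(* The group T \rtimes S_n = C^x \wr S_n, realised as the group of monomial *)
(* matrices in GL_n(C) (group law = matrix product): every row and every    *)
(* column contains exactly one nonzero entry.                               *)
Definition monomial (n : nat) (g : 'M[C]_n) : bool :=
  [forall i, #|[pred j | g i j != 0]| == 1%N] &&
  [forall j, #|[pred i | g i j != 0]| == 1%N].

(* Sym^k(V), V = C^n the defining representation: Sym(V) is the polynomial  *)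
(* algebra on the standard basis e_1..e_n (the variables 'X_i), Sym^k(V) its *)
(* homogeneous degree-k part, and g acts by the algebra automorphism        *)
(* e_j |-> g e_j = \sum_i g_ij e_i.                                          *)
Definition SymSpace (n k : nat) (p : {mpoly C[n]}) : bool :=
  all (fun m => mdeg m == k) (msupp p).

Arguments SymSpace : clear implicits.

Definition sym_act (n : nat) (g : 'M[C]_n) (p : {mpoly C[n]}) : {mpoly C[n]} :=
  comp_mpoly [tuple \sum_(i < n) g i j *: 'X_i | j < n] p.

(* For a composition nu = (nu_1,...,nu_l) of n, index i (0-based) lies in   *)
(* block j iff nu_1+...+nu_j <= i < nu_1+...+nu_(j+1).                       *)
Definition block (nu : seq nat) (i : nat) : nat :=
  find (fun j => i < sumn (take j.+1 nu))%N (iota 0 (size nu)).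

(* The block-diagonal subgroup (C^x wr S_nu_1) x ... x (C^x wr S_nu_l):     *)
(* monomial matrices whose nonzero entries lie in the diagonal blocks.      *)
Definition in_block_subgroup (n : nat) (nu : seq nat) (h : 'M[C]_n) : bool :=
  monomial h &&
  [forall i, forall j, (h i j != 0) ==> (block nu i == block nu j)].

(* The one-dimensional representation S^{(nu_1),w_1} (x) ... (x) S^{(nu_l),w_l} *)
(* of the block subgroup: the one-row Specht module S^{(r)} is the trivial  *)
(* representation of S_r, and each copy of C^x in block j acts by z |-> z^{w_j}. *)
(* For a monomial h, the unique nonzero entry of row i is \sum_j h i j.      *)
Definition block_char (n : nat) (nu : seq nat) (w : seq int) (h : 'M[C]_n) : C :=
  \prod_(i < n) (\sum_(j < n) h i j) ^ (nth 0%R w (block nu i)).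

(* Induced representation (Frobenius / function model):                     *)
(*   Ind_H^G W = { f : G -> W | f (h x) = h . f(x) for h in H, x in G },     *)
(* with G acting by right translation (g . f)(x) = f (x g).  Functions are   *)
(* represented on all of 'M_n and required to vanish off G.                  *)
Definition MSpace (n : nat) (nu : seq nat) (w : seq int) (f : 'M[C]_n -> C) : Prop :=
  (forall x : 'M[C]_n, ~~ monomial x -> f x = 0) /\
  (forall h x : 'M[C]_n, in_block_subgroup nu h -> monomial x ->
     f (h *m x) = block_char nu w h * f x).

Definition ind_act (n : nat) (g : 'M[C]_n) (f : 'M[C]_n -> C) : 'M[C]_n -> C :=
  fun x => f (x *m g).

(* tilde M (lambda^1, ..., lambda^j) = M((n-m, lambda^1, ..., lambda^j),    *)
(* (0, 1,...,1, ..., j,...,j)), the part n-m omitted if zero.                *)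
Definition mtilde_comp (n : nat) (lams : seq (seq nat)) : seq nat :=
  let m := sumn (map sumn lams) in
  (if (n - m)%N == 0%N then [::] else [:: (n - m)%N]) ++ flatten lams.

Definition mtilde_wts (n : nat) (lams : seq (seq nat)) : seq int :=
  let m := sumn (map sumn lams) in
  (if (n - m)%N == 0%N then [::] else [:: 0%Z]) ++
  flatten [seq nseq (size (nth [::] lams i)) (Posz i.+1) | i <- iota 0 (size lams)].

Definition MtildeSpace (n : nat) (lams : seq (seq nat)) : ('M[C]_n -> C) -> Prop :=
  MSpace (mtilde_comp n lams) (mtilde_wts n lams).

Arguments MtildeSpace : clear implicits.

Definition one_row (a : nat) : seq nat := if a == 0%N then [::] else [:: a].

(* A_k^n : k-tuples (a_1,...,a_k) of nonnegative integers with              *)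
(* a_1 + 2 a_2 + ... + k a_k = k and a_1 + ... + a_k <= n.  A tuple is       *)
(* encoded as a : {ffun 'I_k -> 'I_k.+1}, a_(j+1) = a j (each a_i <= k is   *)
(* automatic from the first condition, so no tuple is lost).                *)
Definition in_A (n k : nat) (a : {ffun 'I_k -> 'I_k.+1}) : bool :=
  ((\sum_(j < k) j.+1 * a j == k) && (\sum_(j < k) a j <= n))%N.

Arguments in_A : clear implicits.

Definition tuple_parts (k : nat) (a : {ffun 'I_k -> 'I_k.+1}) : seq (seq nat) :=
  [seq one_row (a j) | j <- enum 'I_k].

(* The direct sum  \bigoplus_{a in A_k^n} tilde M((a_1),...,(a_k)):          *)
(* families F indexed by the tuples, with F a in the a-th summand for a in  *)
(* A_k^n and F a = 0 otherwise; G acts componentwise.                        *)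
Definition DSumSpace (n k : nat)
    (F : {ffun 'I_k -> 'I_k.+1} -> 'M[C]_n -> C) : Prop :=
  forall a : {ffun 'I_k -> 'I_k.+1}, (in_A n k a -> MtildeSpace n (tuple_parts a) (F a)) /\
            (~~ in_A n k a -> F a = fun _ => 0).

Arguments DSumSpace : clear implicits.

Definition dsum_act (n k : nat) (g : 'M[C]_n)
    (F : {ffun 'I_k -> 'I_k.+1} -> 'M[C]_n -> C) :
    {ffun 'I_k -> 'I_k.+1} -> 'M[C]_n -> C :=
  fun a => ind_act g (F a).

(* Main.v *)
Require Import Defs.
From mathcomp Require Import all_boot all_order all_algebra all_fingroup.
From mathcomp Require Import Rstruct complex mpoly.
From Stdlib Require Import FunctionalExtensionality.
Set Implicit Arguments. Unset Strict Implicit. Unset Printing Implicit Defensive.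
Import GRing.Theory.
Local Open Scope ring_scope.
Definition pmx n (s : 'S_n) (d : 'I_n -> C) : 'M[C]_n :=
  \matrix_(i, j) (if i == s j then d j else 0).

Lemma pmx_monomial n (s : 'S_n) d : (forall j, d j != 0) -> monomial (pmx s d).
Proof.
move=> dnz; apply/andP; split; apply/forallP => i.
- apply/card1P; exists (s^-1 i)%g => j; rewrite !inE mxE.
  case: (i =P s j) => [->|ne]; first by rewrite dnz permK eqxx.
  rewrite eqxx /=; symmetry; apply/eqP => E; apply: ne; by rewrite E permKV.
- apply/card1P; exists (s i) => j; rewrite !inE mxE.
  by case: ifP => _; rewrite ?dnz ?eqxx.
Qed.

Lemma monomialP n (g : 'M[C]_n) : monomial g ->
  exists s : 'S_n, exists d : 'I_n -> C, (forall j, d j != 0) /\ g = pmx s d.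
Proof.
case/andP => /forallP Hr /forallP Hc.
have Hc' j : exists i, [pred i | g i j != 0] =i pred1 i by apply/card1P/Hc.
have Hr' i : exists j, [pred j | g i j != 0] =i pred1 j by apply/card1P/Hr.
pose f j := odflt j [pick i | g i j != 0].
have fP j : g (f j) j != 0.
  rewrite /f; case: pickP => [i //|H]. case: (Hc' j) => i Hi.
  by move: (Hi i); rewrite !inE eqxx H.
have fU i j : g i j != 0 -> i = f j.
  move=> nz; case: (Hc' j) => i0 Hi0.
  have := Hi0 i; have := Hi0 (f j); rewrite !inE nz fP.
  by move=> /esym/eqP -> /esym/eqP ->.
have finj : injective f.
  move=> j1 j2 e; case: (Hr' (f j1)) => j0 Hj0.
  have := Hj0 j1; have := Hj0 j2; rewrite !inE fP e fP.
  by move=> /esym/eqP -> /esym/eqP ->.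
exists (perm finj), (fun j => g (f j) j); split => //.
apply/matrixP => i j; rewrite mxE permE.
case: eqP => [->//|ne]; apply/eqP; apply/negPn/negP => nz; exact: ne (fU _ _ nz).
Qed.

Lemma pmx_mul n (s t : 'S_n) d e :
  pmx s d *m pmx t e = pmx (t * s)%g (fun j => d (t j) * e j).
Proof.
apply/matrixP => i j; rewrite !mxE (bigD1 (t j)) //= !mxE eqxx big1 ?addr0.
  by rewrite permM; case: eqP; rewrite ?mul0r.
by move=> l /negbTE ne; rewrite !mxE ne mulr0.
Qed.

Lemma pmx1 n : pmx (1%g : 'S_n) (fun _ => 1) = 1%:M.
Proof. by apply/matrixP => i j; rewrite !mxE perm1 eq_sym; case: eqP. Qed.

Lemma monomial_mul n (x g : 'M[C]_n) : monomial x -> monomial g -> monomial (x *m g).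
Proof.
move=> /monomialP [s [d [dnz ->]]] /monomialP [t [e [enz ->]]].
rewrite pmx_mul; apply: pmx_monomial => j; by rewrite mulf_neq0.
Qed.

Lemma monomial_inv n (g : 'M[C]_n) : monomial g ->
  exists2 g', monomial g' & g *m g' = 1%:M.
Proof.
move=> /monomialP [s [d [dnz ->]]].
exists (pmx (s^-1)%g (fun j => (d (s^-1 j)%g)^-1)).
  by apply: pmx_monomial => j; rewrite invr_eq0.
rewrite pmx_mul mulVg -pmx1; congr pmx; apply: functional_extensionality => j.
by rewrite mulfV.
Qed.

Lemma monomial_mulr n (x g : 'M[C]_n) : monomial g ->
  monomial (x *m g) = monomial x.
Proof.
move=> mg; apply/idP/idP; last by move=> mx; exact: monomial_mul.
case: (monomial_inv mg) => g' mg' E mxg.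
by have := monomial_mul mxg mg'; rewrite -mulmxA E mulmx1.
Qed.
Lemma comp_mpolyA (R : comRingType) n (lq lr : n.-tuple {mpoly R[n]}) (p : {mpoly R[n]}) :
  (p \mPo lr) \mPo lq = p \mPo [tuple (tnth lr i) \mPo lq | i < n].
Proof.
rewrite (comp_mpolyEX p lr) raddf_sum /= (comp_mpolyEX p).
apply: eq_bigr => m _.
rewrite comp_mpolyZ; congr (_ *: _).
rewrite !comp_mpolyX.
rewrite (rmorph_prod (comp_mpoly lq)).
apply: eq_bigr => i _.
by rewrite (rmorphXn (comp_mpoly lq)) tnth_mktuple.
Qed.

Lemma comp_lin (R : comRingType) n (lq : n.-tuple {mpoly R[n]}) (c : 'I_n -> R) :
  (\sum_(i < n) c i *: 'X_i) \mPo lq = \sum_(i < n) c i *: tnth lq i.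
Proof.
rewrite (raddf_sum (comp_mpoly lq)); apply: eq_bigr => i _.
transitivity (c i *: 'X_i \mPo lq); first by [].
by rewrite comp_mpolyZ comp_mpolyXU -tnth_nth.
Qed.
Lemma sym_act_comp n (x g : 'M[C]_n) p :
  sym_act x (sym_act g p) = sym_act (x *m g) p.
Proof.
rewrite /sym_act (comp_mpolyA (R := C)).
apply: (congr1 (fun lq => comp_mpoly lq p)).
apply: eq_from_tnth => j; rewrite !tnth_mktuple (comp_lin (R := C)).
under eq_bigr do rewrite tnth_mktuple scaler_sumr.
rewrite exchange_big /=; apply: eq_bigr => l _; rewrite mxE scaler_suml.
by apply: eq_bigr => r _; rewrite scalerA mulrC.
Qed.

Lemma sym_actD n (g : 'M[C]_n) p q : sym_act g (p + q) = sym_act g p + sym_act g q.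
Proof. by rewrite /sym_act comp_mpolyD. Qed.
Lemma sym_act0 n (g : 'M[C]_n) : sym_act g 0 = 0.
Proof. by rewrite /sym_act comp_mpoly0. Qed.
Lemma sym_actZ n (g : 'M[C]_n) c p : sym_act g (c *: p) = c *: sym_act g p.
Proof. by rewrite /sym_act comp_mpolyZ. Qed.
Lemma sym_act_sum n (g : 'M[C]_n) (I : Type) (r : seq I) (P : pred I) F :
  sym_act g (\sum_(i <- r | P i) F i) = \sum_(i <- r | P i) sym_act g (F i).
Proof. exact: (big_morph _ (sym_actD g) (sym_act0 g)). Qed.
Lemma mcoeff_sum n (m : 'X_{1..n}) (I : Type) (r : seq I) (P : pred I) (F : I -> {mpoly C[n]}) :
  (\sum_(i <- r | P i) F i)@_m = \sum_(i <- r | P i) (F i)@_m.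
Proof. apply: (big_morph _ (fun p q => mcoeffD m p q) (mcoeff0 _ m)). Qed.

Lemma sym_act_pmxX n (s : 'S_n) d (m : 'X_{1..n}) :
  sym_act (pmx s d) 'X_[m] =
  (\prod_(j < n) d j ^+ m j) *: 'X_[[multinom m (s^-1 i)%g | i < n]].
Proof.
rewrite /sym_act comp_mpolyX (@mpolyXE _ C s).
under eq_bigr => j _.
  rewrite tnth_mktuple (bigD1 (s j)) //= mxE eqxx big1 ?addr0; last first.
    by move=> l /negbTE ne; rewrite mxE ne scale0r.
  rewrite exprZn; over.
rewrite scaler_prod; congr (_ *: _); apply: eq_bigr => j _.
by rewrite mnmE permK.
Qed.

Lemma coeff_sym_act n (s : 'S_n) d p (mm : 'X_{1..n}) :
  (sym_act (pmx s d) p)@_mm =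
  p@_[multinom mm (s j) | j < n] * \prod_(j < n) d j ^+ mm (s j).
Proof.
set m0 := [multinom mm (s j) | j < n].
have E (m : 'X_{1..n}) : ([multinom m (s^-1 i)%g | i < n] == mm) = (m == m0).
  apply/eqP/eqP => H; apply/mnmP => i.
    by rewrite /m0 mnmE -H mnmE permK.
  by rewrite mnmE H /m0 mnmE permKV.
rewrite {1}(mpolyE p) sym_act_sum mcoeff_sum.
under eq_bigr => m _.
  rewrite sym_actZ sym_act_pmxX mcoeffZ mcoeffZ mcoeffX E.
  over.
have Hc : \prod_(j < n) d j ^+ mm (s j) = \prod_(j < n) d j ^+ m0 j.
  by apply: eq_bigr => j _; rewrite mnmE.
case: (boolP (m0 \in msupp p)) => Hm.
  rewrite (bigD1_seq m0) //= eqxx mulr1 [X in _ + X]big1 ?addr0 ?Hc //.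
  by move=> m /negbTE ->; rewrite mulr0 mulr0.
rewrite big_seq big1; last first.
  move=> m Hm'; have -> : (m == m0) = false.
    by apply/eqP => E'; move: Hm; rewrite -E' Hm'.
  by rewrite mulr0 mulr0.
by move: Hm; rewrite -mcoeff_eq0 => /eqP ->; rewrite mul0r.
Qed.

Lemma block_cons (s : nat) nu i :
  block (s :: nu) i = if (i < s)%N then 0%N else (block nu (i - s)).+1.
Proof.
rewrite /block /= take0 addn0; case: ltnP => // le_si; congr S.
have -> : iota 1 (size nu) = map S (iota 0 (size nu)) by rewrite -(iotaDl 1 0).
rewrite find_map; apply: eq_find => j /=.
by rewrite ltn_subLR.
Qed.

Lemma blockL (L : seq (nat * int)) i :
  nth 0 (map snd L) (block (map fst L) i) =
  nth 0 (flatten [seq nseq l.1 l.2 | l <- L]) i.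
Proof.
elim: L i => [|[s w] L IH] i /=; first by rewrite !nth_nil.
rewrite block_cons nth_cat size_nseq; case: ltnP => H /=.
  by rewrite nth_nseq H.
exact: IH.
Qed.

Lemma block_lt nu i : (i < sumn nu)%N -> (block nu i < size nu)%N.
Proof.
move=> H; rewrite /block -[X in (_ < X)%N](size_iota 0) -has_find; apply/hasP.
case: nu H => [//|s nu] H; exists (size nu).
  by rewrite mem_iota /=.
by rewrite /= take_size.
Qed.

Lemma block_uniq (L : seq (nat * int)) i j :
  uniq (map snd L) -> (i < sumn (map fst L))%N -> (j < sumn (map fst L))%N ->
  nth 0 (flatten [seq nseq l.1 l.2 | l <- L]) i =
  nth 0 (flatten [seq nseq l.1 l.2 | l <- L]) j ->
  block (map fst L) i = block (map fst L) j.
Proof.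
move=> U Hi Hj; rewrite -!blockL => E; apply/eqP.
have Hs : size (map fst L) = size (map snd L) by rewrite !size_map.
rewrite -(nth_uniq 0 _ _ U) ?E // -Hs; exact: block_lt.
Qed.

Definition sA k (a : {ffun 'I_k -> 'I_k.+1}) : nat := (\sum_(j < k) a j)%N.
Definition Wl k (c0 : nat) (c : 'I_k -> nat) : seq nat :=
  nseq c0 0%N ++ flatten [seq nseq (c j) j.+1 | j <- enum 'I_k].
Definition Wn n k (a : {ffun 'I_k -> 'I_k.+1}) : seq nat :=
  Wl (n - sA a) (fun j => nat_of_ord (a j)).
Definition nzp k (a : {ffun 'I_k -> 'I_k.+1}) (j : 'I_k) : bool := (nat_of_ord (a j) != 0%N).
Definition La n k (a : {ffun 'I_k -> 'I_k.+1}) : seq (nat * int) :=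
  (if (n - sA a == 0)%N then [::] else [:: ((n - sA a)%N, 0%Z)]) ++
  map (fun j : 'I_k => (nat_of_ord (a j), Posz j.+1)) (filter (nzp a) (enum 'I_k)).

Section LaFacts.
Variables (n k : nat) (a : {ffun 'I_k -> 'I_k.+1}).

Lemma h1 (s : seq 'I_k) :
  sumn (map sumn (map (fun j => one_row (a j)) s)) = (\sum_(j <- s) a j)%N.
Proof.
elim: s => [|j s IH] /=; first by rewrite big_nil.
by rewrite big_cons IH /one_row; case: eqP => [->|] //=; rewrite addn0.
Qed.

Lemma h2 (s : seq 'I_k) :
  flatten (map (fun j => one_row (a j)) s) =
  map (fun j : 'I_k => nat_of_ord (a j)) (filter (nzp a) s).
Proof.
elim: s => [|j s IH] //=; rewrite /one_row /nzp.
by case: eqP => /= _; rewrite IH.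
Qed.

Lemma h3 (s : seq 'I_k) :
  flatten [seq nseq (size (one_row (a j))) (Posz j.+1) | j <- s] =
  map (fun j : 'I_k => Posz j.+1) (filter (nzp a) s).
Proof.
elim: s => [|j s IH] //=; rewrite /one_row /nzp.
by case: eqP => /= _; rewrite IH.
Qed.

Lemma h4 (s : seq 'I_k) :
  flatten [seq nseq l.1 l.2 | l <- map (fun j : 'I_k => (nat_of_ord (a j), Posz j.+1)) (filter (nzp a) s)] =
  map Posz (flatten [seq nseq (nat_of_ord (a j)) j.+1 | j <- s]).
Proof.
elim: s => [|j s IH] //=; case E: (nzp a j) => /=.
  by rewrite map_cat map_nseq IH.
by move: E; rewrite /nzp => /negbFE /eqP ->; rewrite IH.
Qed.

Lemma h5 (s : seq 'I_k) :
  sumn (map fst (map (fun j : 'I_k => (nat_of_ord (a j), Posz j.+1)) (filter (nzp a) s))) =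
  (\sum_(j <- s) a j)%N.
Proof.
elim: s => [|j s IH] /=; first by rewrite big_nil.
rewrite big_cons /nzp; case: eqP => /= [->|_]; by rewrite IH.
Qed.

Lemma sA_enum : (\sum_(j <- enum 'I_k) a j)%N = sA a.
Proof. by rewrite big_enum. Qed.

Lemma comp_La : mtilde_comp n (tuple_parts a) = map fst (La n a).
Proof.
rewrite /mtilde_comp /tuple_parts h1 h2 sA_enum /La map_cat -map_comp.
by case: ifP.
Qed.

Lemma wts_La : mtilde_wts n (tuple_parts a) = map snd (La n a).
Proof.
rewrite /mtilde_wts /tuple_parts h1 sA_enum /La map_cat size_map size_enum_ord.
congr (_ ++ _); first by case: ifP.
rewrite -val_enum_ord -[in LHS]map_comp.
rewrite (eq_map (g := fun j : 'I_k => nseq (size (one_row (a j))) (Posz j.+1))); last first.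
  move=> j /=; rewrite (nth_map j) ?size_enum_ord ?ltn_ord // nth_ord_enum //.
by rewrite h3 -map_comp.
Qed.

Lemma flat_La : flatten [seq nseq l.1 l.2 | l <- La n a] = map Posz (Wn n a).
Proof.
rewrite /La /Wn /Wl map_cat flatten_cat h4 map_cat map_nseq; congr (_ ++ _).
by case: eqP => [->|] //=; rewrite cats0.
Qed.

Lemma uniq_La : uniq (map snd (La n a)).
Proof.
rewrite /La map_cat cat_uniq -map_comp; apply/and3P; split.
- by case: ifP.
- by case: ifP => _; apply/hasPn => x /mapP [j _ ->]; rewrite ?inE.
- rewrite map_inj_in_uniq; first by apply: filter_uniq; apply: enum_uniq.
  by move=> i j _ _ /= [] /val_inj.
Qed.

Lemma sum_La : sumn (map fst (La n a)) = (n - sA a + sA a)%N.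
Proof.
rewrite /La map_cat sumn_cat h5 sA_enum; congr (_ + _)%N.
by case: eqP => [->|] //=; rewrite addn0.
Qed.

End LaFacts.

Definition ma n k (a : {ffun 'I_k -> 'I_k.+1}) : 'X_{1..n} :=
  [multinom nth 0%N (Wn n a) i | i < n].

Lemma nth_Posz (s : seq nat) i : nth 0 (map Posz s) i = Posz (nth 0%N s i).
Proof.
case: (ltnP i (size s)) => H; first by rewrite (nth_map 0%N).
by rewrite !nth_default ?size_map.
Qed.

Lemma wt_block n k (a : {ffun 'I_k -> 'I_k.+1}) i :
  nth 0 (mtilde_wts n (tuple_parts a)) (block (mtilde_comp n (tuple_parts a)) i) =
  Posz (nth 0%N (Wn n a) i).
Proof. by rewrite wts_La comp_La blockL flat_La nth_Posz. Qed.

Lemma block_eq n k (a : {ffun 'I_k -> 'I_k.+1}) (i j : 'I_n) :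
  (sA a <= n)%N -> nth 0%N (Wn n a) i = nth 0%N (Wn n a) j ->
  block (mtilde_comp n (tuple_parts a)) i = block (mtilde_comp n (tuple_parts a)) j.
Proof.
move=> Hs E; rewrite comp_La; apply: block_uniq; first exact: uniq_La.
- by rewrite sum_La subnK.
- by rewrite sum_La subnK.
by rewrite flat_La !nth_Posz E.
Qed.

Lemma sumn_map (T : Type) (f : T -> nat) (s : seq T) :
  sumn (map f s) = (\sum_(j <- s) f j)%N.
Proof. by elim: s => [|x s IH] /=; rewrite ?big_nil ?big_cons ?IH. Qed.

Section WlFacts.
Variables (k : nat).

Lemma size_Wl c0 (c : 'I_k -> nat) : size (Wl c0 c) = (c0 + \sum_(j < k) c j)%N.
Proof.
rewrite /Wl size_cat size_nseq size_flatten /shape -map_comp sumn_map big_enum.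
by apply: congr1; apply: eq_bigr => j _ /=; rewrite size_nseq.
Qed.

Lemma sumn_Wl c0 (c : 'I_k -> nat) : sumn (Wl c0 c) = (\sum_(j < k) c j * j.+1)%N.
Proof.
rewrite /Wl sumn_cat sumn_flatten -map_comp sumn_map big_enum.
have -> : sumn (nseq c0 0%N) = 0%N by elim: c0.
apply: eq_bigr => j _ /=; elim: (c j) => //= l ->; by rewrite mulSn.
Qed.

Lemma count_Wl c0 (c : 'I_k -> nat) x :
  count_mem x (Wl c0 c) = ((0 == x) * c0 + \sum_(j < k) (j.+1 == x) * c j)%N.
Proof.
rewrite /Wl count_cat count_nseq count_flatten -map_comp sumn_map big_enum.
by congr (_ + _)%N; apply: eq_bigr => j _ /=; rewrite count_nseq.
Qed.

Lemma eq_Wl c0 (c c' : 'I_k -> nat) : c =1 c' -> Wl c0 c = Wl c0 c'.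
Proof. by move=> E; rewrite /Wl (eq_map (g := fun j => nseq (c' j) j.+1)) // => j; rewrite E. Qed.

Lemma perm_Wl (s : seq nat) : all (fun x : nat => (x <= k)%N) s ->
  perm_eq s (Wl (count_mem 0%N s) (fun j : 'I_k => count_mem j.+1 s)).
Proof.
move=> /allP Hs; rewrite /perm_eq; apply/allP => x _; apply/eqP.
rewrite count_Wl; case: x => [|x].
  rewrite eqxx mul1n big1 ?addn0 // => j _; by rewrite mul0n.
rewrite mul0n add0n; case: (ltnP x k) => Hx.
  rewrite (bigD1 (Ordinal Hx)) //= eqxx mul1n big1 ?addn0 // => j.
  move=> /eqP ne; have -> : (j.+1 == x.+1) = false; last by rewrite mul0n.
  by apply/eqP => -[E]; apply: ne; apply: val_inj.
rewrite big1; last first.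
  move=> j _; have -> : (j.+1 == x.+1) = false; last by rewrite mul0n.
  by apply/eqP => -[E]; move: (ltn_ord j); rewrite E ltnNge Hx.
apply/count_memPn/negP => /Hs; by rewrite leqNgt ltnS Hx.
Qed.

End WlFacts.

Definition mseq n (m : 'X_{1..n}) : seq nat := [seq m i | i <- enum 'I_n].
Definition tp n k (m : 'X_{1..n}) : {ffun 'I_k -> 'I_k.+1} :=
  [ffun j : 'I_k => inord (count_mem j.+1 (mseq m))].

Lemma size_mseq n (m : 'X_{1..n}) : size (mseq m) = n.
Proof. by rewrite size_map size_enum_ord. Qed.

Lemma mdeg_mseq n (m : 'X_{1..n}) : mdeg m = sumn (mseq m).
Proof. by rewrite mdegE /mseq sumn_map big_enum. Qed.

Lemma count_le v (s : seq nat) : (count_mem v s * v <= sumn s)%N.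
Proof.
elim: s => //= x s IH; case: eqP => [->|_] /=.
  by rewrite mulnDl mul1n leq_add2l.
by rewrite add0n; apply: leq_trans IH (leq_addl _ _).
Qed.

Lemma tp_val n k (m : 'X_{1..n}) (j : 'I_k) : mdeg m = k ->
  (tp k m j : nat) = count_mem j.+1 (mseq m).
Proof.
move=> H; have := count_le j.+1 (mseq m); rewrite -mdeg_mseq H => Hc.
by rewrite ffunE inordK // ltnS; apply: leq_trans Hc; exact: leq_pmulr.
Qed.

Lemma all_le n k (m : 'X_{1..n}) : mdeg m = k -> all (fun x : nat => (x <= k)%N) (mseq m).
Proof.
move=> H; apply/allP => x /mapP [i _ ->].
by rewrite -H mdegE (bigD1 i) //= leq_addr.
Qed.

Lemma T1 n k (m : 'X_{1..n}) : mdeg m = k ->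
  in_A n k (tp k m) /\ perm_eq (mseq m) (Wn n (tp k m)).
Proof.
move=> Hd; have P := perm_Wl (all_le Hd).
have Hsz := perm_size P; rewrite size_Wl size_mseq in Hsz.
have HsA : sA (tp k m) = (\sum_(j < k) count_mem j.+1 (mseq m))%N.
  by apply: eq_bigr => j _; rewrite tp_val.
have HW : Wn n (tp k m) = Wl (count_mem 0%N (mseq m)) (fun j : 'I_k => count_mem j.+1 (mseq m)).
  rewrite /Wn HsA {1}Hsz addnK; apply: eq_Wl => j; exact: tp_val.
split; last by rewrite HW.
rewrite /in_A; apply/andP; split.
  apply/eqP; transitivity (sumn (mseq m)); last by rewrite -mdeg_mseq.
  rewrite (perm_sumn P) sumn_Wl.
  by apply: eq_bigr => j _; rewrite tp_val // mulnC.
by rewrite -/(sA _) HsA {2}Hsz leq_addl.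
Qed.

Lemma T2 n k (a : {ffun 'I_k -> 'I_k.+1}) : in_A n k a ->
  [/\ mseq (ma n a) = Wn n a, tp k (ma n a) = a & mdeg (ma n a) = k].
Proof.
case/andP => /eqP Hk Hs.
have Hsz : size (Wn n a) = n by rewrite /Wn size_Wl subnK.
have Hms : mseq (ma n a) = Wn n a.
  rewrite /mseq /ma (eq_map (g := fun i : 'I_n => nth 0%N (Wn n a) i)); last first.
    by move=> i; rewrite mnmE.
  rewrite (map_comp (nth 0%N (Wn n a)) val) val_enum_ord.
  by rewrite -[RHS](mkseq_nth 0%N) Hsz.
split => //.
  apply/ffunP => j; rewrite ffunE Hms /Wn count_Wl mul0n add0n.
  rewrite (bigD1 j) //= eqxx mul1n big1 ?addn0; first by apply: val_inj; rewrite /= inordK.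
  move=> l /eqP ne; have -> : (l.+1 == j.+1) = false; last by rewrite mul0n.
  by apply/eqP => -[E]; apply: ne; apply: val_inj.
rewrite mdeg_mseq Hms /Wn sumn_Wl; transitivity (\sum_(j < k) j.+1 * a j)%N; last exact: Hk.
by apply: eq_bigr => j _; rewrite mulnC.
Qed.

Lemma mseq_perm n (m : 'X_{1..n}) (s : 'S_n) :
  perm_eq (mseq [multinom m (s i) | i < n]) (mseq m).
Proof.
rewrite /mseq (eq_map (g := fun i => m (s i))); last by move=> i; rewrite mnmE.
rewrite (map_comp m s); apply: perm_map.
apply: uniq_perm; first by rewrite map_inj_uniq ?enum_uniq //; exact: perm_inj.
  exact: enum_uniq.
move=> x; rewrite mem_enum; apply/mapP; exists (s^-1 x)%g; by rewrite ?mem_enum ?permKV.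
Qed.

Lemma tp_perm n k (m : 'X_{1..n}) (s : 'S_n) :
  tp k [multinom m (s i) | i < n] = tp k m.
Proof.
apply/ffunP => j; rewrite !ffunE; congr inord.
by move/seq.permP: (mseq_perm m s) => ->.
Qed.

Lemma perm_exists n (m m' : 'X_{1..n}) :
  perm_eq (mseq m) (mseq m') -> exists s : 'S_n, forall i, m i = m' (s i).
Proof.
move=> P; have E : val [tuple m' i | i < n] = mseq m'.
  by rewrite /mseq /=.
rewrite -E in P; case/tuple_permP: P => s Hs; exists s => i.
have := congr1 (fun t => nth 0%N t i) Hs.
rewrite /mseq (nth_map i) ?size_enum_ord // nth_ord_enum => ->.
by rewrite -tnth_nth !tnth_mktuple.
Qed.

Lemma bc_pmx n k (a : {ffun 'I_k -> 'I_k.+1}) (s : 'S_n) d :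
  block_char (mtilde_comp n (tuple_parts a)) (mtilde_wts n (tuple_parts a)) (pmx s d) =
  \prod_(j < n) d j ^+ ma n a (s j).
Proof.
rewrite /block_char (reindex_inj (@perm_inj _ s)) /=; apply: eq_bigr => j _.
rewrite wt_block -exprnP mnmE; congr (_ ^+ _).
rewrite (bigD1 j) //= mxE eqxx big1 ?addr0 // => l ne.
rewrite mxE; case: eqP => // /perm_inj E; by move: ne; rewrite E eqxx.
Qed.

Lemma ma_block n k (a : {ffun 'I_k -> 'I_k.+1}) (i j : 'I_n) :
  block (mtilde_comp n (tuple_parts a)) i = block (mtilde_comp n (tuple_parts a)) j ->
  ma n a i = ma n a j.
Proof.
move=> E; have := wt_block n a i; rewrite E wt_block => -[].
by rewrite !mnmE.
Qed.

Definition Phi n k (p : {mpoly C[n]}) (a : {ffun 'I_k -> 'I_k.+1}) (x : 'M[C]_n) : C :=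
  if monomial x && in_A n k a then (sym_act x p)@_(ma n a) else 0.

Lemma Phi_lin n k (c : C) (p q : {mpoly C[n]}) :
  Phi (k := k) (c *: p + q) = fun a x => c * Phi p a x + Phi q a x.
Proof.
apply: functional_extensionality => a; apply: functional_extensionality => x.
rewrite /Phi; case: (monomial x && in_A n k a); last by rewrite mulr0 addr0.
by rewrite sym_actD sym_actZ mcoeffD mcoeffZ.
Qed.

Lemma Phi_dsum n k p : DSumSpace n k (Phi p).
Proof.
move=> a; split => [HA|nA]; last first.
  apply: functional_extensionality => x; by rewrite /Phi (negbTE nA) andbF.
split.
  by move=> x /negbTE nx; rewrite /Phi nx.
move=> h x Hh Hx; have Hmh : monomial h by case/andP: Hh.
rewrite /Phi monomial_mul // Hx HA /= -sym_act_comp.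
case/andP: Hh => _ /forallP Hb.
case/monomialP: Hmh => s [d [dnz Eh]]. rewrite Eh in Hb *.
have Em : [multinom ma n a (s j) | j < n] = ma n a.
  apply/mnmP => j; rewrite mnmE; apply: ma_block.
  by have := Hb (s j) => /forallP /(_ j); rewrite mxE eqxx dnz /= => /eqP.
rewrite [LHS](coeff_sym_act s d (sym_act x p) (ma n a)) (bc_pmx a s d) Em.
exact: mulrC.
Qed.

Lemma Phi_equiv n k (g : 'M[C]_n) p : monomial g ->
  Phi (k := k) (sym_act g p) = dsum_act g (Phi p).
Proof.
move=> Hg; apply: functional_extensionality => a; apply: functional_extensionality => x.
rewrite /dsum_act /ind_act /Phi (monomial_mulr x Hg).
case: (monomial x && in_A n k a); last by [].
by rewrite [in LHS](sym_act_comp x g p).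
Qed.

Lemma Phi_inj n k p : SymSpace n k p -> Phi (k := k) p = (fun _ _ => 0) -> p = 0.
Proof.
move=> Hp H0; apply/mpolyP => m; rewrite mcoeff0.
case: (boolP (m \in msupp p)) => Hm; last by apply/eqP; rewrite mcoeff_eq0.
have Hd : mdeg m = k by move/allP: Hp => /(_ m Hm) /eqP.
have [HA Hperm] := T1 Hd; have [Hms _ _] := T2 HA.
rewrite -Hms in Hperm; case: (perm_exists Hperm) => s Hs.
have := congr1 (fun F => F (tp k m) (pmx s (fun _ => 1))) H0.
have Hm1 := pmx_monomial s (fun _ => oner_neq0 C).
rewrite /Phi Hm1 HA /=.
rewrite [X in X = _ -> _](coeff_sym_act s (fun _ => 1) p (ma n (tp k m))).
have -> : [multinom ma n (tp k m) (s j) | j < n] = m.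
  by apply/mnmP => j; rewrite mnmE Hs.
rewrite big1 ?mulr1; first by [].
by move=> j _; exact: expr1n.
Qed.

Definition sp n k (m : 'X_{1..n}) : 'S_n :=
  odflt 1%g [pick s : 'S_n | [forall i, m i == ma n (tp k m) (s i)]].
Definition cf n k (F : {ffun 'I_k -> 'I_k.+1} -> 'M[C]_n -> C) (m : 'X_{1..n}) : C :=
  if mdeg m == k then F (tp k m) (pmx (sp k m) (fun _ => 1)) else 0.
Definition pre n k (F : {ffun 'I_k -> 'I_k.+1} -> 'M[C]_n -> C) : {mpoly C[n]} :=
  \sum_(b : 'X_{1..n < k.+1}) cf F b *: 'X_[b].

Lemma pre_coeff n k (F : {ffun 'I_k -> 'I_k.+1} -> 'M[C]_n -> C) m :
  (pre F)@_m = cf F m.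
Proof.
rewrite /pre mcoeff_sum.
under eq_bigr => b _ do rewrite mcoeffZ mcoeffX.
case: (ltnP (mdeg m) k.+1) => Hlt.
  rewrite (bigD1 (BMultinom Hlt)) //= eqxx mulr1 big1 ?addr0 //.
  move=> b ne; have -> : (bmnm b == m) = false; last by rewrite mulr0.
  apply/negbTE; apply: contra ne => /eqP E; apply/eqP/val_inj; exact: E.
rewrite big1.
  rewrite /cf; case: (mdeg m =P k) => // E; by move: Hlt; rewrite E ltnn.
move=> b _; have -> : (bmnm b == m) = false; last by rewrite mulr0.
by apply/eqP => E; move: (bmdeg b); rewrite E ltnNge Hlt.
Qed.

Lemma Phi_surj n k (F : {ffun 'I_k -> 'I_k.+1} -> 'M[C]_n -> C) :
  DSumSpace n k F -> exists2 p, SymSpace n k p & Phi p = F.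
Proof.
move=> HF; exists (pre F).
  apply/allP => m; rewrite mcoeff_msupp pre_coeff /cf.
  by case: (mdeg m == k); rewrite ?eqxx.
apply: functional_extensionality => a; apply: functional_extensionality => x.
rewrite /Phi; case HA: (in_A n k a); last first.
  by rewrite andbF ((HF a).2 (negbT HA)).
case Hx: (monomial x) => /=; last by rewrite (((HF a).1 HA).1 x (negbT Hx)).
case/monomialP: Hx => s [d [dnz ->]].
rewrite [LHS](coeff_sym_act s d (pre F) (ma n a)) pre_coeff.
set m' := [multinom ma n a (s j) | j < n].
have [Hms Htp Hdeg] := T2 HA.
have Htp' : tp k m' = a by rewrite tp_perm Htp.
have Hd' : mdeg m' = k by rewrite mdeg_mseq (perm_sumn (mseq_perm _ _)) -mdeg_mseq.
rewrite /cf Hd' eqxx.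
have Ht : forall i, ma n a (s i) = ma n a (sp k m' i).
  rewrite /sp; case: pickP => [t0 /forallP Ht0 | H].
    by move=> i; have := Ht0 i; rewrite Htp' mnmE => /eqP.
  exfalso; move: (H s) => /negP; apply; apply/forallP => i.
  by rewrite Htp' mnmE.
rewrite Htp'; set t := sp k m' in Ht *.
have Ex : pmx s d = pmx (t^-1 * s)%g (fun j => d (t^-1 j)%g) *m pmx t (fun _ => 1).
  rewrite pmx_mul mulgA mulgV mul1g; congr pmx.
  by apply: functional_extensionality => j; rewrite permK mulr1.
have HsA : (sA a <= n)%N by case/andP: HA.
have Hh : in_block_subgroup (mtilde_comp n (tuple_parts a))
            (pmx (t^-1 * s)%g (fun j => d (t^-1 j)%g)).
  apply/andP; split; first by apply: pmx_monomial => j; exact: dnz.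
  apply/forallP => i; apply/forallP => j; apply/implyP; rewrite mxE.
  case E: (i == (t^-1 * s)%g j); last by rewrite eqxx.
  move=> _; move/eqP: E => ->; apply/eqP; apply: block_eq => //.
  have := Ht ((t^-1)%g j); rewrite permKV permM !mnmE => ->.
  by [].
have Hm1 := pmx_monomial t (fun _ => oner_neq0 C).
rewrite Ex (((HF a).1 HA).2 _ _ Hh Hm1) (bc_pmx a) mulrC; congr (_ * _).
rewrite [RHS](reindex_inj (@perm_inj _ t)) /=.
by apply: eq_bigr => j _; rewrite permK permM permK.
Qed.

Theorem proposition3p5 (n k : nat) :
  exists Phi : {mpoly C[n]} -> {ffun 'I_k -> 'I_k.+1} -> 'M[C]_n -> C,
    [/\ (* Phi is C-linear *)
        (forall (c : C) (p q : {mpoly C[n]}),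
           Phi (c *: p + q) = fun a x => c * Phi p a x + Phi q a x),
        (* Phi maps Sym^k(V) into the direct sum *)
        (forall p, SymSpace n k p -> DSumSpace n k (Phi p)),
        (* Phi is injective on Sym^k(V) *)
        (forall p, SymSpace n k p -> Phi p = (fun _ _ => 0) -> p = 0),
        (* Phi is onto the direct sum *)
        (forall F, DSumSpace n k F -> exists2 p, SymSpace n k p & Phi p = F) &
        (* Phi is T \rtimes S_n-equivariant *)
        (forall (g : 'M[C]_n) p, monomial g -> SymSpace n k p ->
           Phi (sym_act g p) = dsum_act g (Phi p))].
Proof.
exists (@Phi n k); split.
- move=> c p q; exact: Phi_lin.
- move=> p _; exact: Phi_dsum.
- move=> p Hp H0; exact: Phi_inj Hp H0.
- move=> F HF; exact: Phi_surj.
- move=> g p Hg _; exact: Phi_equiv.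
Qed.
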